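(* Let $N\ge1$ and $1\le m\le N$ be integers, and let $D_{N,m}=|D_{N,m}\rangle\langle D_{N,m}|$ be the projector onto the Dicke state with $m$ excitations. Then $C_S(D_{N,m})\le m(2m+3)N+1$.
   Context: The Dicke state is $|D_{N,m}\rangle=\binom{N}{m}^{-1/2}\sum_\pi|0\rangle^{\otimes(N-m)}|1\rangle^{\otimes m}$, the normalized uniform superposition of all $N$-bit computational basis states of Hamming weight $m$. $\mathbb{I},\sigma_X,\sigma_Y,\sigma_Z$ are the identity and Pauli matrices. The notation $\sum_\pi \mathbb{I}^{\otimes j}\otimes A^{\otimes (N-j)}$ denotes the sum, over all distinct placements, of tensor products in which exactly $j$ of the $N$ factors are $\mathbb{I}$ and the other $N-j$ are $A$ (each distinct arrangement counted once). Measurement complexity: for an $N$-qubit permutation-invariant operator $\rho$, $C_S(\rho)$ is the minimal $n_A$ such that there exist real $b_i,c_i,d_i$ and real $\alpha_{ij}$ ($1\le i\le n_A$, $0\le j\le N$) with $\rho=\sum_{i=1}^{n_A}\sum_{j=0}^{N}\alpha_{ij}\sum_\pi\mathbb{I}^{\otimes j}\otimes A_i^{\otimes(N-j)}$, $A_i=b_i\sigma_X+c_i\sigma_Y+d_i\sigma_Z$. *)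

(* Defs.v *)
From HB Require Import structures.
From mathcomp Require Import all_boot all_order all_algebra all_field.
Set Implicit Arguments. Unset Strict Implicit. Unset Printing Implicit Defensive.
Import Order.TTheory GRing.Theory Num.Theory.
Local Open Scope ring_scope.

(* Computational basis states of N qubits: bitstrings x : 'I_N -> bool
   (false = |0>, true = |1>). *)
Definition bits (N : nat) := {ffun 'I_N -> bool}.

(* An N-qubit operator, given by its matrix entries <x| rho |y>. *)
Definition op (N : nat) := bits N -> bits N -> algC.

Definition qop := bool -> bool -> algC.

Definition id2 : qop := fun a b => (a == b)%:R.
Definition sigmaX : qop := fun a b => (a != b)%:R.
Definition sigmaY : qop := fun a b =>
  match a, b with
  | false, true => - 'i
  | true, false => 'i
  | _, _ => 0
  end.
Definition sigmaZ : qop := fun a b =>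
  if a == b then (if a then -1 else 1) else 0.

Definition pauliA (b c d : algC) : qop :=
  fun u v => b * sigmaX u v + c * sigmaY u v + d * sigmaZ u v.

Definition tens (N : nat) (A : 'I_N -> qop) : op N :=
  fun x y => \prod_(k < N) A k (x k) (y k).

(* sum_pi I^{(x) j} (x) A^{(x)(N-j)}: sum over all placements, i.e. over all
   sets S of j positions carrying the identity, the others carrying A. *)
Definition symsum (N j : nat) (A : qop) : op N :=
  fun x y => \sum_(S : {set 'I_N} | #|S| == j)
               tens (fun k => if k \in S then id2 else A) x y.

Definition has_decomp (N : nat) (rho : op N) (nA : nat) : Prop :=
  exists (b c d : 'I_nA -> algC) (alpha : 'I_nA -> 'I_N.+1 -> algC),
    (forall i, b i \is Num.real) /\ (forall i, c i \is Num.real) /\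
    (forall i, d i \is Num.real) /\ (forall i j, alpha i j \is Num.real) /\
    forall x y : bits N,
      rho x y = \sum_(i < nA) \sum_(j < N.+1)
                  alpha i j * symsum (nat_of_ord j) (pauliA (b i) (c i) (d i)) x y.

(* C_S(rho) <= K  iff  some decomposition uses at most K directions
   (C_S(rho) is the minimal such n_A). *)
Definition CS_le (N : nat) (rho : op N) (K : nat) : Prop :=
  exists nA, (nA <= K)%N /\ has_decomp rho nA.

Definition weight (N : nat) (x : bits N) : nat := #|[set k | x k]|.

Definition dicke (N m : nat) (x : bits N) : algC :=
  if weight x == m then (sqrtC ('C(N, m))%:R)^-1 else 0.

Definition dicke_proj (N m : nat) : op N :=
  fun x y => dicke m x * (dicke m y)^*.

(* Main.v *)
Require Import Defs.
From HB Require Import structures.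
From mathcomp Require Import all_boot all_order all_algebra all_field.
From mathcomp Require Import zify ring lra.
Set Implicit Arguments. Unset Strict Implicit. Unset Printing Implicit Defensive.
Import Order.TTheory GRing.Theory Num.Theory.
Local Open Scope ring_scope.

Lemma expand N (A : qop) (s : algC) (x y : bits N) :
  \sum_(j < N.+1) s ^+ j * symsum j A x y =
  \prod_(k < N) (s * id2 (x k) (y k) + A (x k) (y k)).
Proof.
rewrite bigA_distr.
have E : forall S : {set 'I_N},
  \prod_(k < N) (if k \in S then s * id2 (x k) (y k) else A (x k) (y k)) =
  s ^+ #|S| * tens (fun k => if k \in S then id2 else A) x y.
  move=> S; rewrite /tens.
  rewrite (eq_bigr (fun k => (if k \in S then s else 1) *
     (if k \in S then id2 else A) (x k) (y k))); last first.
    by move=> k _; case: (k \in S); rewrite ?mul1r.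
  rewrite big_split /=; congr (_ * _).
  by rewrite -big_mkcond /= prodr_const.
under eq_bigr do rewrite E.
rewrite (partition_big (fun S : {set 'I_N} => (inord #|S| : 'I_N.+1)) xpredT) //=.
apply: eq_bigr => j _; rewrite /symsum big_distrr /=.
apply: eq_big => [S|S].
  rewrite -val_eqE /=.
  by rewrite inordK // ltnS -[X in (_ <= X)%N]card_ord max_card.
move=> /eqP <-.
by [].
Qed.

Definition cnt N (x y : bits N) (a b : bool) : nat :=
  #|[set k | (x k, y k) == (a, b)]|.

Lemma prod4 N (x y : bits N) (F : bool -> bool -> algC) :
  \prod_(k < N) F (x k) (y k) =
  F false false ^+ cnt x y false false * F true true ^+ cnt x y true true *
  F false true ^+ cnt x y false true * F true false ^+ cnt x y true false.
Proof.
rewrite (partition_big (fun k => (x k, y k)) xpredT) //=.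
have E : forall ab : bool * bool,
  \prod_(k | (x k, y k) == ab) F (x k) (y k) = F ab.1 ab.2 ^+ cnt x y ab.1 ab.2.
  move=> [a b]; rewrite /cnt -prodr_const.
  apply: eq_big => [k|k /eqP [-> ->]] //; by rewrite inE.
under eq_bigr do rewrite E.
rewrite -(pair_bigA _ (fun a b => F a b ^+ cnt x y a b)) /= !big_bool /=.
ring.
Qed.

Lemma sum4 N (x y : bits N) (F : bool -> bool -> nat) :
  (\sum_(k < N) F (x k) (y k) =
  F false false * cnt x y false false + F true true * cnt x y true true +
  F false true * cnt x y false true + F true false * cnt x y true false)%N.
Proof.
rewrite (partition_big (fun k => (x k, y k)) xpredT) //=.
have E : forall ab : bool * bool,
  (\sum_(k | (x k, y k) == ab) F (x k) (y k) = F ab.1 ab.2 * cnt x y ab.1 ab.2)%N.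
  move=> [a b]; rewrite /cnt mulnC -sum_nat_const.
  apply: eq_big => [k|k /eqP [-> ->]] //; by rewrite inE.
under eq_bigr do rewrite E.
rewrite -(pair_bigA _ (fun a b => F a b * cnt x y a b)%N) /= !big_bool /=.
lia.
Qed.

Lemma cnt_sum N (x y : bits N) :
  (cnt x y false false + cnt x y true true + cnt x y false true + cnt x y true false = N)%N.
Proof.
have := sum4 x y (fun _ _ => 1%N); rewrite sum1_card card_ord => h; lia.
Qed.

Lemma weight_x N (x y : bits N) : weight x = (cnt x y true true + cnt x y true false)%N.
Proof.
have h := sum4 x y (fun a _ => nat_of_bool a); rewrite /= in h.
rewrite /weight -sum1_card big_mkcond /=.
rewrite (eq_bigr (fun k => nat_of_bool (x k))) ?h; first lia.
by move=> k _; rewrite inE; case: (x k).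
Qed.

Lemma weight_y N (x y : bits N) : weight y = (cnt x y true true + cnt x y false true)%N.
Proof.
have h := sum4 x y (fun _ b => nat_of_bool b); rewrite /= in h.
rewrite /weight -sum1_card big_mkcond /=.
rewrite (eq_bigr (fun k => nat_of_bool (y k))) ?h; first lia.
by move=> k _; rewrite inE; case: (y k).
Qed.

Definition sp N (l : 'I_N.+1) : algC := (l + 2)%:R.

Definition Ev N (b c d : algC) (g : 'I_N.+1 -> algC) (x y : bits N) : algC :=
  \sum_(l < N.+1) g l *
    \prod_(k < N) (sp l * id2 (x k) (y k) + pauliA b c d (x k) (y k)).

Lemma CS_of_fin N (rho : op N) (K : nat) (T : finType) (b c d : T -> algC)
  (g : T -> 'I_N.+1 -> algC) :
  (#|T| <= K)%N -> (forall i, b i \is Num.real) -> (forall i, c i \is Num.real) ->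
  (forall i, d i \is Num.real) -> (forall i l, g i l \is Num.real) ->
  (forall x y, rho x y = \sum_(i : T) Ev (b i) (c i) (d i) (g i) x y) ->
  CS_le rho K.
Proof.
move=> hK hb hc hd hg hrho; exists #|T|; split => //.
exists (fun i => b (enum_val i)), (fun i => c (enum_val i)), (fun i => d (enum_val i)).
exists (fun i j => \sum_(l < N.+1) g (enum_val i) l * sp l ^+ j).
split; first by move=> i; apply: hb.
split; first by move=> i; apply: hc.
split; first by move=> i; apply: hd.
split.
  move=> i j; apply: rpred_sum => l _; apply: rpredM; first exact: hg.
  by apply: rpredX; rewrite /sp realn.
move=> x y; rewrite hrho (big_enum_val (A := T)).
apply: eq_bigr => i _; rewrite /Ev.
symmetry.
under eq_bigr do rewrite big_distrl /=.
rewrite exchange_big /=; apply: eq_bigr => l _.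
rewrite -expand big_distrr /=; apply: eq_bigr => j _; by rewrite !mulrA.
Qed.
Lemma interp K (t : 'I_K.+1 -> algC) (ht : injective t)
  (tr : forall l, t l \is Num.real) (v : nat -> algC)
  (vr : forall p, v p \is Num.real) :
  exists c : 'I_K.+1 -> algC, (forall l, c l \is Num.real) /\
    forall p : nat, (p <= K)%N -> \sum_(l < K.+1) c l * t l ^+ p = v p.
Proof.
pose V := Vandermonde K.+1 (\row_l t l).
have VU : V \in unitmx.
  rewrite unitmxE unitfE det_Vandermonde; apply/prodf_neq0 => i _.
  apply/prodf_neq0 => j ij; rewrite !mxE subr_eq0; apply/eqP => /ht ji.
  by rewrite ji ltnn in ij.
pose w := invmx V *m \col_(p < K.+1) v p.
have Vw : V *m w = \col_(p < K.+1) v p by rewrite mulKVmx.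
exists (fun l => 'Re (w l 0)); split; first by move=> l; apply: Creal_Re.
move=> p pK.
have := congr1 (fun M : 'M_(K.+1, 1) => M (inord p) 0) Vw.
rewrite !mxE inordK // => E.
rewrite -(Creal_ReP _ (vr p)) -E raddf_sum /=; apply: eq_bigr => l _.
have -> : V (inord p) l = t l ^+ p by rewrite !mxE inordK.
by rewrite ReMl ?rpredX // mulrC.
Qed.

Lemma spB1 N (l : 'I_N.+1) : sp l - 1 = (l + 1)%:R.
Proof. by rewrite /sp (_ : (l + 2 = (l + 1) + 1)%N) ?natrD ?addrK //; lia. Qed.
Lemma spD1 N (l : 'I_N.+1) : sp l + 1 = (l + 3)%:R.
Proof. by rewrite /sp (_ : (l + 3 = (l + 2) + 1)%N) ?natrD //; lia. Qed.

Lemma interp_s N K (hK : (K <= N)%N) (v : nat -> algC)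
  (vr : forall p, v p \is Num.real) :
  exists g : 'I_N.+1 -> algC, (forall l, g l \is Num.real) /\
    forall p : nat, (p <= K)%N ->
      \sum_(l < N.+1) g l * ((sp l + 1) ^+ (K - p) * (sp l - 1) ^+ p) = v p.
Proof.
have nz : forall l : 'I_N.+1, sp l + 1 != 0.
  by move=> l; rewrite spD1 pnatr_eq0 addn3.
pose t := fun l : 'I_N.+1 => (sp l - 1) / (sp l + 1).
have ht : injective t.
  move=> a b; rewrite /t => /eqP; rewrite eqr_div ?nz //.
  rewrite !spB1 !spD1 -!natrM eqr_nat => /eqP h.
  apply/val_inj => /=; move: h; nia.
have tr : forall l, t l \is Num.real.
  by move=> l; rewrite /t spB1 spD1 rpredM ?rpredV ?realn.
have [c [cr hc]] := interp ht tr vr.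
exists (fun l => c l / (sp l + 1) ^+ K); split.
  by move=> l; rewrite spD1 rpredM ?rpredV ?rpredX ?realn.
move=> p pK; rewrite -(hc p (leq_trans pK hK)); apply: eq_bigr => l _.
rewrite /t -{1}(subnK pK) exprD expr_div_n.
have := nz l; set u := sp l + 1 => unz.
field; by rewrite ?mulf_neq0 ?expf_neq0.
Qed.

Lemma angle_sum M (z : algC) (hz : M.-primitive_root z) (u v : nat)
  (hu : (u < M)%N) (hv : (v < M)%N) :
  \sum_(k < M) ((z ^+ k)^* ^+ u * (z ^+ k) ^+ v) = if u == v then M%:R else 0.
Proof.
have M0 := prim_order_gt0 hz.
have zM := prim_expr_order hz.
have n1 : `|z| = 1.
  apply/eqP; rewrite -(pexpr_eq1 M0) ?normr_ge0 // -normrX zM normr1 //.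
have zz : z^* * z = 1 by rewrite -normCKC n1 expr1n.
pose zeta := z^* ^+ u * z ^+ v.
have E : forall k, (z ^+ k)^* ^+ u * (z ^+ k) ^+ v = zeta ^+ k.
  move=> k; rewrite /zeta exprMn rmorphXn /= -!exprM mulnC exprM [in RHS]mulnC exprM.
  by [].
under eq_bigr do rewrite E.
have [uv0|uv] := eqVneq u v.
  have -> : zeta = 1 by rewrite /zeta uv0 -exprMn zz expr1n.
  by rewrite (eq_bigr (fun _ => 1)) ?sumr_const ?card_ord // => k _; rewrite expr1n.
have zeta1 : zeta != 1.
  apply/eqP => h.
  have : z ^+ u * zeta = z ^+ u by rewrite h mulr1.
  rewrite /zeta mulrA -exprMn (mulrC z) zz expr1n mul1r => /eqP.
  rewrite (eq_prim_root_expr hz) !modn_small // => /eqP h2.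
  by rewrite h2 eqxx in uv.
have zM' : zeta ^+ M = 1.
  by rewrite /zeta exprMn -!exprM mulnC exprM -rmorphXn zM rmorph1 expr1n
    mulnC exprM zM expr1n mulr1.
have : (zeta - 1) * \sum_(k < M) zeta ^+ k = 0 by rewrite -subrX1 zM' subrr.
by move/eqP; rewrite mulf_eq0 subr_eq0 (negbTE zeta1) /= => /eqP.
Qed.

Lemma Ev_cnt N b c d (g : 'I_N.+1 -> algC) (x y : bits N) :
  Ev b c d g x y =
  (\sum_(l < N.+1) g l * ((sp l + d) ^+ cnt x y false false * (sp l - d) ^+ cnt x y true true)) *
  ((b - c * 'i) ^+ cnt x y false true * (b + c * 'i) ^+ cnt x y true false).
Proof.
rewrite /Ev big_distrl /=; apply: eq_bigr => l _; rewrite (prod4 x y (fun a a2 => sp l * id2 a a2 + pauliA b c d a a2)).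
rewrite /id2 /pauliA /sigmaX /sigmaY /sigmaZ /=.
have -> : sp l * 1 + (b * 0 + c * 0 + d * 1) = sp l + d by ring.
have -> : sp l * 1 + (b * 0 + c * 0 + d * -1) = sp l - d by ring.
have -> : sp l * 0 + (b * 1 + c * - 'i + d * 0) = b - c * 'i by ring.
have -> : sp l * 0 + (b * 1 + c * 'i + d * 0) = b + c * 'i by ring.
ring.
Qed.

Definition Lg N (g : 'I_N.+1 -> algC) (a p : nat) : algC :=
  \sum_(l < N.+1) g l * ((sp l + 1) ^+ a * (sp l - 1) ^+ p).

Lemma Lg_real N (g : 'I_N.+1 -> algC) a p :
  (forall l, g l \is Num.real) -> Lg g a p \is Num.real.
Proof.
move=> hg; apply: rpred_sum => l _; apply: rpredM; first exact: hg.
apply: rpredM; apply: rpredX; [apply: rpredD|apply: rpredB]; rewrite /sp; [exact: realn|exact: rpred1|exact: realn|exact: rpred1].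
Qed.

Lemma Ev_Z N (g : 'I_N.+1 -> algC) (x y : bits N) :
  Ev 0 0 1 g x y = Lg g (cnt x y false false) (cnt x y true true) *
    (0 ^+ cnt x y false true * 0 ^+ cnt x y true false).
Proof. by rewrite Ev_cnt /Lg !mul0r subr0 addr0. Qed.

Lemma Ev_G N (rho z e M : algC) (k : nat) (g : 'I_N.+1 -> algC) (x y : bits N) :
  rho \is Num.real ->
  Ev ('Re (rho * z ^+ k)) ('Im (rho * z ^+ k)) 1 (fun l => e / M * g l) x y =
  e / M * Lg g (cnt x y false false) (cnt x y true true) *
  rho ^+ (cnt x y false true + cnt x y true false) *
  ((z ^+ k)^* ^+ cnt x y false true * (z ^+ k) ^+ cnt x y true false).
Proof.
move=> hr; rewrite Ev_cnt /Lg.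
set w := rho * z ^+ k.
have E1 : 'Re w + 'Im w * 'i = w by rewrite mulrC -Crect.
have E2 : 'Re w - 'Im w * 'i = w^*.
  by rewrite {3}(Crect w) conjC_rect ?Creal_Re ?Creal_Im // mulrC.
rewrite E1 E2 /w rmorphM /= (conj_Creal hr) !exprMn exprD.
rewrite big_distrr /=.
under eq_bigr do rewrite mulrA.
rewrite !mulr_suml; apply: eq_bigr => l _; ring.
Qed.

Lemma sum45 m : (\sum_(r < m) (4 * r + 4).+1 = m * (2 * m + 3))%N.
Proof.
elim: m => [|m IH]; first by rewrite big_ord0.
rewrite big_ord_recr /= IH; lia.
Qed.

Theorem theorem3 (N m : nat) (hN : (1 <= N)%N) (hm1 : (1 <= m)%N) (hmN : (m <= N)%N) :
  CS_le (@dicke_proj N m) (m * (2 * m + 3) * N + 1)%N.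
Proof.
pose zz : algC := (sqrtC ('C(N, m))%:R)^-1.
pose kap := zz * zz^*.
have kapr : kap \is Num.real by rewrite /kap -normCK rpredX // normr_real.
pose Mr (r : 'I_m) := (4 * r + 4).+1.
pose zf (r : 'I_m) : algC := sval (C_prim_root_exists (ltn0Sn (4 * r + 4))).
have zfP : forall r, (Mr r).-primitive_root (zf r).
  by move=> r; rewrite /zf; case: (C_prim_root_exists _).
have eH : forall r : 'I_m, exists er : 'I_N.+1 -> algC,
   (forall i, er i \is Num.real) /\ forall q, (q <= N)%N ->
   \sum_(i < N.+1) er i * (i%:R) ^+ q = (q == 2 * r.+1)%N%:R.
  move=> r; apply: interp.
  - by move=> i j /eqP; rewrite eqr_nat => /eqP h; apply: val_inj.
  - by move=> i; apply: realn.
  - by move=> q; apply: realn.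
have [e eP] := fin_all_exists eH.
have gH : forall r : 'I_m, exists gr : 'I_N.+1 -> algC,
   (forall l, gr l \is Num.real) /\ forall p, (p <= N - 2 * r.+1)%N ->
   Lg gr (N - 2 * r.+1 - p) p = kap * (p == m - r.+1)%N%:R.
  move=> r; apply: interp_s; first exact: leq_subr.
  by move=> p; rewrite rpredM ?realn.
have [g gP] := fin_all_exists gH.
have [g0 [g0r g0P]] : exists g0 : 'I_N.+1 -> algC,
   (forall l, g0 l \is Num.real) /\ forall p, (p <= N)%N ->
   Lg g0 (N - p) p = kap * (p == m)%N%:R +
      \sum_(r < m) e r ord0 * Lg (g r) (N - p) p.
  apply: interp_s => // p; apply: rpredD; first by rewrite rpredM ?realn.
  apply: rpred_sum => r _; apply: rpredM; first by case: (eP r).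
  by apply: Lg_real => l; case: (gP r).
pose S := {r : 'I_m & 'I_(Mr r)}.
pose T := (unit + S * 'I_N)%type.
pose wf (r : 'I_m) (k : nat) (i : 'I_N) : algC := (i.+1)%:R * zf r ^+ k.
pose bf (t : T) : algC := match t with inl _ => 0 | inr (s, i) => 'Re (wf (tag s) (tagged s) i) end.
pose cf (t : T) : algC := match t with inl _ => 0 | inr (s, i) => 'Im (wf (tag s) (tagged s) i) end.
pose df (t : T) : algC := 1.
pose gf (t : T) : 'I_N.+1 -> algC := match t with inl _ => g0
  | inr (s, i) => fun l => e (tag s) (lift ord0 i) / (Mr (tag s))%:R * g (tag s) l end.
apply: (@CS_of_fin N _ _ T bf cf df gf).
- rewrite card_sum card_unit card_prod card_tagged sumnE big_map big_enum /=.
  have -> : (\sum_(i in 'I_m) #|'I_(Mr i)| = \sum_(i < m) (4 * i + 4).+1)%N.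
    by apply: eq_big => // i; rewrite card_ord.
  by rewrite sum45 card_ord addnC.
- by case=> [[]|[s i]]; rewrite /bf /=; [exact: rpred0 | exact: Creal_Re].
- by case=> [[]|[s i]]; rewrite /cf /=; [exact: rpred0 | exact: Creal_Im].
- by move=> i; apply: rpred1.
- case=> [[]|[s i]] l; rewrite /gf /=; first exact: g0r.
  apply: rpredM; last by case: (gP (tag s)).
  by rewrite rpredM ?rpredV ?realn //; case: (eP (tag s)).
move=> x y.
rewrite big_sumType.
rewrite (big_pred1 tt) //.
have -> : \sum_(p : S * 'I_N) Ev (bf (inr p)) (cf (inr p)) (df (inr p)) (gf (inr p)) x y
  = \sum_(s : S) \sum_(i < N) Ev (bf (inr (s, i))) (cf (inr (s, i)))
   (df (inr (s, i))) (gf (inr (s, i))) x y.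
  symmetry; rewrite (pair_bigA _ (fun s i => Ev (bf (inr (s, i))) (cf (inr (s, i)))
   (df (inr (s, i))) (gf (inr (s, i))) x y)); by apply: eq_bigr => -[s i].
rewrite -(@sig_big_dep _ _ _ 'I_m (fun r => 'I_(Mr r)) xpredT (fun _ _ => true)
   (fun r k => \sum_(i < N) Ev (bf (inr ((Tagged (fun r0 : 'I_m => 'I_(Mr r0)) k : S), i))) (cf (inr ((Tagged (fun r0 : 'I_m => 'I_(Mr r0)) k : S), i)))
   (df (inr ((Tagged (fun r0 : 'I_m => 'I_(Mr r0)) k : S), i))) (gf (inr ((Tagged (fun r0 : 'I_m => 'I_(Mr r0)) k : S), i))) x y)) /=.
rewrite /bf /cf /df /gf /= Ev_Z.
under eq_bigr => r _ do under eq_bigr => k _ do under eq_bigr => i _ do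
  rewrite Ev_G ?realn //.
have hsum := cnt_sum x y.
have T0 : dicke_proj m x y = kap *
   ((cnt x y true true + cnt x y true false == m) &&
    (cnt x y true true + cnt x y false true == m))%N%:R.
  rewrite /dicke_proj /dicke (weight_x x y) (weight_y x y) /kap -/zz.
  by case: (_ == m)%N; case: (_ == m)%N; rewrite /= ?rmorph0 ?mulr1 ?mulr0 ?mul0r.
rewrite T0; move: hsum.
set a := cnt x y false false; set p := cnt x y true true.
set u := cnt x y false true; set v := cnt x y true false => hsum.
have GR : forall r : 'I_m,
  \sum_(k < Mr r) \sum_(i < N) e r (lift ord0 i) / (Mr r)%:R * Lg (g r) a p *
     (i.+1)%:R ^+ (u + v) * ((zf r ^+ k)^* ^+ u * zf r ^+ k ^+ v) =
  Lg (g r) a p * ((u + v == 2 * r.+1) && (u == v))%N%:R -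
  e r ord0 * Lg (g r) a p * (u + v == 0)%N%:R.
  move=> r.
  have F1 : \sum_(i < N) e r (lift ord0 i) * (i.+1)%:R ^+ (u + v) =
     (u + v == 2 * r.+1)%N%:R - e r ord0 * (u + v == 0)%N%:R.
    have [_ h] := eP r; have := h (u + v)%N ltac:(lia).
    rewrite big_ord_recl /= expr0n => <-.
    rewrite [X in _ = X - _]addrC -addrA subrr addr0; apply: eq_bigr => i _; by [].
  have F2 : \sum_(k < Mr r) \sum_(i < N) e r (lift ord0 i) / (Mr r)%:R *
     Lg (g r) a p * (i.+1)%:R ^+ (u + v) * ((zf r ^+ k)^* ^+ u * zf r ^+ k ^+ v) =
     Lg (g r) a p / (Mr r)%:R * (\sum_(i < N) e r (lift ord0 i) * (i.+1)%:R ^+ (u + v)) *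
     \sum_(k < Mr r) ((zf r ^+ k)^* ^+ u * zf r ^+ k ^+ v).
    rewrite mulr_sumr; apply: eq_bigr => k _; rewrite mulr_sumr mulr_suml.
    by apply: eq_bigr => i _; ring.
  have Mnz : ((Mr r)%:R : algC) != 0 by rewrite pnatr_eq0.
  rewrite F2 F1.
  have [q0|q0] := eqVneq (u + v)%N 0%N.
    have u0 : u = 0%N by lia.
    have v0 : v = 0%N by lia.
    rewrite u0 v0 (angle_sum (zfP r)) //=.
    field; exact: Mnz.
  have [q2|q2] := eqVneq (u + v)%N (2 * r.+1)%N.
    rewrite (angle_sum (zfP r)) /=; try (rewrite /Mr; lia).
    case: (u == v); rewrite ?mulr0 ?mulr1 ?subr0 //.
    field; by rewrite pnatr_eq0.
  by rewrite /= ?mulr0n ?mulr0 ?subr0 ?mul0r ?mulr0 ?subrr ?mul0r.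
under eq_bigr do rewrite GR.
have [q0|q0] := eqVneq (u + v)%N 0%N.
  have u0 : u = 0%N by lia.
  have v0 : v = 0%N by lia.
  have a0 : a = (N - p)%N by lia.
  rewrite a0 (g0P p) ?u0 ?v0 ?expr0 ?mulr1 ?addn0 ?andbb; last by lia.
  rewrite [X in _ = _ + X](eq_bigr (fun i => - (e i ord0 * Lg (g i) (N - p) p))); last first.
    move=> i _; have -> : (0 == 2 * i.+1)%N = false by apply/negbTE/eqP; lia.
    by rewrite /= mulr0 sub0r mulr1.
  by rewrite sumrN addrK.
rewrite -exprD expr0n (negbTE q0) mulr0 add0r.
under eq_bigr do rewrite mulr0 subr0.
have [uv|uv] := eqVneq u v; last first.
  rewrite big1; last by move=> i _; rewrite andbF mulr0.
  have -> : ((p + v)%N == m) && ((p + u)%N == m) = false.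
    apply/negbTE/negP => /andP [/eqP h1 /eqP h2]; move/eqP: uv; apply; lia.
  by rewrite /= ?mulr0n ?mulr0.
rewrite -uv andbb.
have [um|um] := leqP u m; last first.
  rewrite big1; last first.
    move=> i _; have -> : (u + u == 2 * i.+1)%N = false.
      by apply/negbTE/eqP; have := ltn_ord i; lia.
    by rewrite /= ?mulr0n ?mulr0.
  have -> : ((p + u)%N == m) = false by apply/negbTE/eqP; lia.
  by rewrite /= ?mulr0n ?mulr0.
have u1 : (0 < u)%N by lia.
have r0lt : (u.-1 < m)%N by lia.
pose r0 : 'I_m := Ordinal r0lt.
rewrite (bigD1 r0) //= big1 ?addr0; last first.
  move=> i ne; have -> : (u + u == 2 * i.+1)%N = false.
    apply/negbTE/eqP => h; move/eqP: ne; apply; apply/val_inj => /=; lia.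
  by rewrite /= ?mulr0n ?mulr0.
have -> : (u + u == 2 * u.-1.+1)%N = true by apply/eqP; lia.
have a0 : a = (N - 2 * u.-1.+1 - p)%N by lia.
have [_ hg] := gP r0.
rewrite a0 (hg p) /=; last by lia.
rewrite mulr1; have -> : ((p + u)%N == m) = (p == (m - u.-1.+1)%N).
  by apply/idP/idP => /eqP h; apply/eqP; lia.
by [].
Qed.
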